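(* Let $I\subset\mathbb{R}$ be an interval and $(Y(s))_{s\in I}$ a centered Gaussian process whose covariance $r(s,t)=\mathbb{E}[Y(s)Y(t)]$ admits partial derivatives $r^{(a,b)}=\partial_1^a\partial_2^b r$ for $a,b\in\{0,1\}$ (so that $r^{(a,b)}(s,t)=\mathbb{E}[Y^{(a)}(s)Y^{(b)}(t)]$). Assume there is a constant $C$ with $|r^{(a,b)}(s,t)|\le C$ for all $a,b\in\{0,1\}$ and $s,t\in I$. Then for all $s,\tau$ with $s,s+\tau\in I$, \[\big|\det\Sigma(s,s+\tau)-\det\Omega(s)\,\det\Omega(s+\tau)\big|\le 20\,C^2M(\tau)^2 .\]
   Context: $\Omega(s)=\operatorname{Cov}(Y(s),Y'(s))$ is the $2\times2$ covariance matrix, with entries $r(s,s)$, $r^{(1,0)}(s,s)$, $r^{(1,1)}(s,s)$. $\Sigma(s,t)=\operatorname{Cov}(Y(s),Y(t),Y'(s),Y'(t))$ is the $4\times 4$ covariance matrix of this vector (entries given by the appropriate $r^{(a,b)}$). $M(\tau)=\sup_{s}\sup_{a,b\in\{0,1\}}|r^{(a,b)}(s,s+\tau)|$, the supremum over $s$ with $s,s+\tau\in I$. *)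

(* Defs.v *)
From HB Require Import structures.
From mathcomp Require Import all_boot all_order all_algebra.
From mathcomp Require Import all_classical all_reals all_analysis.
Set Implicit Arguments. Unset Strict Implicit. Unset Printing Implicit Defensive.
Import Order.TTheory GRing.Theory Num.Theory.
Import numFieldNormedType.Exports.
Local Open Scope classical_set_scope.
Local Open Scope ring_scope.

Definition centered_gaussian_rv {d} {T : measurableType d} {R : realType}
  (P : probability T R) (X : T -> R) : Prop :=
  (exists2 sigma : R, 0 < sigma &
     forall A : set R, measurable A -> P (X @^-1` A) = normal_prob 0 sigma A)
  \/ P [set w | X w = 0] = 1%E.

Definition centered_gaussian_process {d} {T : measurableType d} {R : realType}
  (P : probability T R) (I : set R) (Y : R -> T -> R) : Prop :=
  (forall s, I s -> measurable_fun setT (Y s)) /\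
  forall (n : nat) (ts cs : 'I_n -> R), (forall i, I (ts i)) ->
    centered_gaussian_rv P (fun w => \sum_(i < n) cs i * Y (ts i) w).

(* f has derivative l at x relative to the set I (one-sided at endpoints). *)
Definition has_deriv_within {R : realType} (I : set R) (f : R -> R) (x l : R)
  : Prop :=
  (fun u => (f u - f x) / (u - x)) @ within (fun u => I u /\ u != x) (nbhs x)
    --> l.

(* r^{(a,b)} for a, b in {0,1} (false = 0, true = 1). *)
Definition rab {R : realType} (r r01 r10 r11 : R -> R -> R) (a b : bool)
  : R -> R -> R :=
  if a then (if b then r11 else r10) else (if b then r01 else r).

(* Sigma(s,t) = Cov(Y(s), Y(t), Y'(s), Y'(t)) : entries r^{(a_i,a_j)}(u_i,u_j)
   where (a_0,u_0)=(0,s), (a_1,u_1)=(0,t), (a_2,u_2)=(1,s), (a_3,u_3)=(1,t). *)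
Definition Sigma {R : realType} (r r01 r10 r11 : R -> R -> R) (s t : R)
  : 'M[R]_4 :=
  \matrix_(i < 4, j < 4)
    rab r r01 r10 r11 (2 <= i)%N (2 <= j)%N
      (if odd i then t else s) (if odd j then t else s).

(* Omega(s) = Cov(Y(s), Y'(s)). *)
Definition Omega {R : realType} (r r01 r10 r11 : R -> R -> R) (s : R)
  : 'M[R]_2 :=
  \matrix_(i < 2, j < 2) rab r r01 r10 r11 (i == 1%N :> nat) (j == 1%N :> nat) s s.

Definition Mtau {R : realType} (I : set R) (r r01 r10 r11 : R -> R -> R)
  (tau : R) : R :=
  sup [set x : R | exists s, [/\ I s, I (s + tau) &
        exists a b, x = `|rab r r01 r10 r11 a b s (s + tau)|]].

(* Main.v *)
Require Import Defs.
From HB Require Import structures.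
From mathcomp Require Import all_boot all_order all_algebra.
From mathcomp Require Import all_classical all_reals all_analysis.
From mathcomp Require Import ring lra measurable_realfun.
Import Order.TTheory GRing.Theory Num.Theory.
Import numFieldNormedType.Exports.
Local Open Scope classical_set_scope.
Local Open Scope ring_scope.
Set Implicit Arguments. Unset Strict Implicit.

Section IP.
Variable R : realType.
Variable r : R -> R -> R.
Implicit Types u w : seq (R * R).

Definition ip u w : R := \sum_(p <- u) \sum_(q <- w) p.1 * q.1 * r p.2 q.2.
Definition sc (c : R) u := [seq (c * p.1, p.2) | p <- u].
Definition dq (y v : R) : seq (R * R) := [:: ((v - y)^-1, v); (- (v - y)^-1, y)].

Lemma ip_catl u1 u2 w : ip (u1 ++ u2) w = ip u1 w + ip u2 w.
Proof. by rewrite /ip big_cat. Qed.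
Lemma ip_catr u w1 w2 : ip u (w1 ++ w2) = ip u w1 + ip u w2.
Proof. by rewrite /ip -big_split; apply: eq_bigr => p _; rewrite big_cat. Qed.
Lemma ip_scl c u w : ip (sc c u) w = c * ip u w.
Proof.
rewrite /ip big_map mulr_sumr; apply: eq_bigr => p _; rewrite mulr_sumr.
by apply: eq_bigr => q _ /=; rewrite !mulrA.
Qed.
Lemma ip_scr c u w : ip u (sc c w) = c * ip u w.
Proof.
rewrite /ip mulr_sumr; apply: eq_bigr => p _; rewrite big_map mulr_sumr.
by apply: eq_bigr => q _ /=; ring.
Qed.
Lemma ip_flatl (T : Type) (s : seq T) (F : T -> seq (R * R)) w :
  ip (flatten (map F s)) w = \sum_(i <- s) ip (F i) w.
Proof.
elim: s => [|a s IH]; first by rewrite big_nil /ip big_nil.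
by rewrite /= ip_catl IH big_cons.
Qed.
Lemma ip_flatr (T : Type) (s : seq T) (F : T -> seq (R * R)) u :
  ip u (flatten (map F s)) = \sum_(i <- s) ip u (F i).
Proof.
elim: s => [|a s IH]; first by rewrite big_nil /ip; apply: big1 => p _; rewrite big_nil.
by rewrite /= ip_catr IH big_cons.
Qed.
Lemma ip_dqr u y v : ip u (dq y v) =
  \sum_(p <- u) p.1 * ((r p.2 v - r p.2 y) / (v - y)).
Proof.
rewrite /ip; apply: eq_bigr => p _; rewrite !big_cons big_nil /=; ring.
Qed.
Lemma ip_dql w y v : ip (dq y v) w =
  \sum_(q <- w) q.1 * ((r v q.2 - r y q.2) / (v - y)).
Proof.
rewrite /ip !big_cons big_nil /= addr0 -big_split /=; apply: eq_bigr => q _; ring.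
Qed.

Definition pts (I : set R) u := forall p, p \in u -> I p.2.

Lemma ip_sym (I : set R) u w : (forall x y, I x -> I y -> r x y = r y x) ->
  pts I u -> pts I w -> ip u w = ip w u.
Proof.
move=> Hs pu pw; rewrite /ip exchange_big /=; apply: eq_big_seq => q qw.
apply: eq_big_seq => p pu'; first [ rewrite (Hs q.2 p.2); [ring|exact: pw|exact: pu] | rewrite (Hs p.2 q.2); [ring|exact: pu|exact: pw] ].
Qed.

End IP.

Section LW.
Variable R : realType.
Variable I : set R.

Definition ev (x : R) (Q : R -> Prop) :=
  exists2 d : R, 0 < d & forall u, I u -> u != x -> `|u - x| < d -> Q u.

Definition limw (x : R) (f : R -> R) (l : R) :=
  forall e, 0 < e -> ev x (fun u => `|f u - l| < e).

Definition hasp (x : R) := forall d : R, 0 < d -> exists u, [/\ I u, u != x & `|u - x| < d].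

Lemma ev_and x Q1 Q2 : ev x Q1 -> ev x Q2 -> ev x (fun u => Q1 u /\ Q2 u).
Proof.
move=> [d1 d10 H1] [d2 d20 H2]; exists (Num.min d1 d2); first by rewrite lt_min d10.
move=> u Iu ux; rewrite lt_min => /andP[h1 h2]; split; [exact: H1|exact: H2].
Qed.

Lemma ev_impl x (Q1 Q2 : R -> Prop) : (forall u, I u -> u != x -> Q1 u -> Q2 u) -> ev x Q1 -> ev x Q2.
Proof. by move=> H [d d0 H1]; exists d => // u Iu ux ud; apply: H => //; apply: H1. Qed.

Lemma ev_ex x Q : hasp x -> ev x Q -> exists u, [/\ I u, u != x & Q u].
Proof.
move=> hp [d d0 H]; have [u [Iu ux ud]] := hp d d0; exists u; split => //; exact: H.
Qed.

Lemma ev_all x (T : eqType) (zs : seq T) (P : T -> R -> Prop) :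
  (forall z, z \in zs -> ev x (P z)) -> ev x (fun u => forall z, z \in zs -> P z u).
Proof.
elim: zs => [|a zs IH] H; first by exists 1 => // u _ _ _ z; rewrite in_nil.
have h1 := H a (mem_head _ _).
have h2 : ev x (fun u => forall z, z \in zs -> P z u).
  by apply: IH => z zs'; apply: H; rewrite inE zs' orbT.
apply: ev_impl (ev_and h1 h2) => u _ _ [ha hz] z; rewrite inE => /orP[/eqP->//|]; exact: hz.
Qed.

Lemma limw_ev x f l e : limw x f l -> 0 < e -> ev x (fun u => `|f u - l| <= e).
Proof. by move=> H e0; apply: ev_impl (H e e0) => u _ _ /ltW. Qed.

Lemma limw_ext x f g l : (forall u, I u -> u != x -> f u = g u) -> limw x f l -> limw x g l.
Proof. by move=> fg H e e0; apply: ev_impl (H e e0) => u Iu ux; rewrite fg. Qed.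

Lemma limw_cst x c : limw x (fun _ => c) c.
Proof. by move=> e e0; exists 1 => // u _ _ _; rewrite subrr normr0. Qed.

Lemma limw_add x f g l m : limw x f l -> limw x g m -> limw x (fun u => f u + g u) (l + m).
Proof.
move=> Hf Hg e e0; have e20 : 0 < e / 2 by rewrite divr_gt0.
apply: ev_impl (ev_and (Hf _ e20) (Hg _ e20)) => u _ _ [h1 h2].
rewrite (_ : f u + g u - (l + m) = (f u - l) + (g u - m)); last by ring.
apply: le_lt_trans (ler_normD _ _) _; rewrite (splitr e); exact: ltrD.
Qed.

Lemma limw_scale x f l c : limw x f l -> limw x (fun u => c * f u) (c * l).
Proof.
move=> Hf e e0; have e20 : 0 < e / (`|c| + 1).
  by rewrite divr_gt0 // ltr_wpDl.
apply: ev_impl (Hf _ e20) => u _ _ h.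
rewrite -mulrBr normrM; apply: (@le_lt_trans _ _ ((`|c| + 1) * `|f u - l|)).
  by apply: ler_wpM2r => //; rewrite lerDl.
by rewrite mulrC -ltr_pdivlMr ?ltr_wpDl.
Qed.

Lemma limw_sum x (T : Type) (s : seq T) (F : T -> R -> R) (L : T -> R) :
  (forall i, limw x (F i) (L i)) -> limw x (fun u => \sum_(i <- s) F i u) (\sum_(i <- s) L i).
Proof.
move=> H; elim: s => [|a s IH].
  by rewrite [X in limw _ _ X]big_nil; apply: (limw_ext _ (limw_cst x 0)) => u _ _; rewrite big_nil.
rewrite [X in limw _ _ X]big_cons; apply: (limw_ext _ (limw_add (H a) IH)) => u _ _; by rewrite big_cons.
Qed.

Lemma le_of_forall (a b : R) : (forall e, 0 < e -> a <= b + e) -> a <= b.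
Proof.
move=> H; rewrite leNgt; apply/negP => ba.
have := H ((a - b) / 2); rewrite divr_gt0 ?subr_gt0 // => /(_ isT).
lra.
Qed.

Lemma limw_close x f g l m (dl : R) : hasp x -> limw x f l -> limw x g m ->
  ev x (fun u => `|f u - g u| <= dl) -> `|l - m| <= dl.
Proof.
move=> hp Hf Hg Hd; apply: le_of_forall => e e0; have e20 : 0 < e / 2 by rewrite divr_gt0.
have [u [_ _ [[h1 h2] h3]]] := ev_ex hp (ev_and (ev_and (Hf _ e20) (Hg _ e20)) Hd).
rewrite (_ : l - m = - (f u - l) + (g u - m) + (f u - g u)); last by ring.
apply: le_trans (ler_normD _ _) _; rewrite addrC lerD //.
apply: le_trans (ler_normD _ _) _; rewrite normrN (splitr e); apply: ltW; exact: ltrD.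
Qed.

Lemma limw_unique x f l m : hasp x -> limw x f l -> limw x f m -> l = m.
Proof.
move=> hp Hl Hm; apply/eqP; rewrite -subr_eq0 -normr_le0.
by apply: limw_close hp Hl Hm _; exists 1 => // u _ _ _; rewrite subrr normr0.
Qed.


Hypothesis HI : is_interval I.

Lemma in_I a b z : I a -> I b -> a <= z -> z <= b -> I z.
Proof. by move=> Ia Ib az zb; move: HI; rewrite /is_interval => H; apply: (H a b) => //; rewrite az zb. Qed.

Lemma interior_derive (g g' : R -> R) a b x : I a -> I b -> a < x -> x < b ->
  limw x (fun u => (g u - g x) / (u - x)) (g' x) -> is_derive x 1 g (g' x).
Proof.
move=> Ia Ib ax xb H.
have hc : (fun h : R => h^-1 *: ((g \o shift x) (h *: 1) - g x)) @ 0^' --> g' x.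
  apply/cvgrPdist_lt => e e0; rewrite near_withinE; apply/nbhs_ballP.
  have [d d0 Hd] := H e e0.
  exists (Num.min d (Num.min (x - a) (b - x))).
    by rewrite /= !lt_min d0 !subr_gt0 ax xb.
  move=> h; rewrite -ball_normE /= sub0r normrN !lt_min => /and3P[hd hxa hbx] h0.
  have Iu : I (h + x).
    apply: (in_I Ia Ib).
      by move: hxa; rewrite ltr_norml => /andP[h1 _]; lra.
    by move: hbx; rewrite ltr_norml => /andP[_ h1]; lra.
  have := Hd (h + x) Iu; rewrite addrK -subr_eq0 addrK => /(_ h0 hd).
  by rewrite distrC [_%:A]mulr1 mulrC.
apply: DeriveDef; first exact: cvgP hc.
exact: cvg_lim hc.
Qed.


Lemma loc_lip (g : R -> R) l x : limw x (fun u => (g u - g x) / (u - x)) l ->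
  ev x (fun u => `|g u - g x| <= (`|l| + 1) * `|u - x|).
Proof.
move=> H; apply: ev_impl (H 1 ltr01) => u _ ux h.
have ux0 : u - x != 0 by rewrite subr_eq0.
have -> : g u - g x = (g u - g x) / (u - x) * (u - x) by rewrite divfK.
rewrite normrM ler_wpM2r //.
rewrite (_ : (g u - g x) / (u - x) = ((g u - g x) / (u - x) - l) + l); last by ring.
apply: le_trans (ler_normD _ _) _; rewrite addrC lerD2l; exact: ltW.
Qed.

Lemma lip_ab (g g' : R -> R) K a b : I a -> I b -> a < b ->
  (forall x, I x -> limw x (fun u => (g u - g x) / (u - x)) (g' x)) ->
  (forall x, I x -> `|g' x| <= K) -> `|g b - g a| <= K * (b - a).
Proof.
move=> Ia Ib ab Hd HK; have K0 : 0 <= K := le_trans (normr_ge0 _) (HK a Ia).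
apply: le_of_forall => e e0.
have [da da0 Ha] := loc_lip (Hd a Ia).
have [db db0 Hb] := loc_lip (Hd b Ib).
set La := `|g' a| + 1; set Lb := `|g' b| + 1.
have La0 : 0 < La by rewrite ltr_wpDl.
have Lb0 : 0 < Lb by rewrite ltr_wpDl.
set et := Num.min ((b - a) / 4) (Num.min (da / 2) (Num.min (db / 2) (e / (La + Lb)))).
have et0 : 0 < et.
  rewrite /et !lt_min; apply/and4P; split; apply: divr_gt0 => //; rewrite ?subr_gt0 //.
  exact: addr_gt0.
have eba : et <= (b - a) / 4 by rewrite /et ge_min lexx.
have eda : et <= da / 2 by rewrite /et !ge_min lexx orbT.
have edb : et <= db / 2 by rewrite /et !ge_min lexx !orbT.
have ee : et <= e / (La + Lb) by rewrite /et !ge_min lexx !orbT.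
have eLL : (La + Lb) * et <= e.
  rewrite mulrC -ler_pdivlMr //; exact: addr_gt0.
set a' := a + et; set b' := b - et.
have aa' : a < a' by rewrite /a'; lra.
have bb' : b' < b by rewrite /b'; lra.
have ab' : a' < b' by rewrite /a' /b'; lra.
have der x : a' <= x -> x <= b' -> is_derive x 1 g (g' x).
  move=> h1 h2; apply: (interior_derive Ia Ib); [lra|lra|].
  by apply: Hd; apply: (in_I Ia Ib); lra.
have [c cab hc] : exists2 c, c \in `]a', b'[ & g b' - g a' = g' c * (b' - a').
  apply: MVT => //.
    by move=> x; rewrite in_itv /= => /andP[h1 h2]; apply: der; apply: ltW.
  apply: derivable_within_continuous => x; rewrite in_itv /= => /andP[h1 h2].
  by have [] := der x h1 h2.
have Ic : I c by move: cab; rewrite in_itv /= => /andP[h1 h2]; apply: (in_I Ia Ib); lra.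
have h1 : `|g b' - g a'| <= K * (b - a).
  rewrite hc normrM (@gtr0_norm _ (b' - a')) ?subr_gt0 //.
  apply: ler_pM; [exact: normr_ge0 | lra | exact: HK | rewrite /a' /b'; lra].
have h2 : `|g a' - g a| <= La * et.
  have := Ha a'; rewrite /a' addrAC subrr add0r (gtr0_norm et0).
  apply; [apply: (in_I Ia Ib); lra | rewrite -subr_eq0; lra | lra].
have h3 : `|g b' - g b| <= Lb * et.
  have := Hb b'; rewrite /b' addrAC subrr add0r normrN (gtr0_norm et0).
  apply; [apply: (in_I Ia Ib); lra | rewrite -subr_eq0; lra | lra].
rewrite (_ : g b - g a = - (g b' - g b) + (g b' - g a') + (g a' - g a)); last by ring.
apply: le_trans (ler_normD _ _) _; apply: le_trans (lerD (ler_normD _ _) (lexx _)) _.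
rewrite normrN; lra.
Qed.

Lemma lip (g g' : R -> R) K :
  (forall x, I x -> limw x (fun u => (g u - g x) / (u - x)) (g' x)) ->
  (forall x, I x -> `|g' x| <= K) ->
  forall a b, I a -> I b -> `|g b - g a| <= K * `|b - a|.
Proof.
move=> Hd HK a b Ia Ib; case: (ltgtP a b) => [ab|ba|->].
- have h : 0 < b - a by rewrite subr_gt0.
  by rewrite (gtr0_norm h); exact: (lip_ab Ia Ib ab Hd HK).
- have h : 0 < a - b by rewrite subr_gt0.
  by rewrite distrC (distrC b) (gtr0_norm h); exact: (lip_ab Ib Ia ba Hd HK).
- by rewrite !subrr normr0 mulr0.
Qed.

End LW.


Section Sel.
Variable R : realType.
Variable I : set R.

Lemma select x (Q : R -> Prop) (Pp : R -> R -> Prop) (bs : seq R) n :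
  hasp I x -> ev I x Q -> (forall y, I y -> y != x -> ev I x (Pp y)) ->
  (forall b, b \in bs -> ev I x (Pp b)) ->
  exists vs : seq R, [/\ size vs = n,
    forall v, v \in vs -> [/\ I v, v != x & Q v],
    forall b v, b \in bs -> v \in vs -> Pp b v &
    forall i j, (i < j)%N -> (j < n)%N -> Pp (nth 0 vs i) (nth 0 vs j)].
Proof.
move=> hp hQ hP hb; elim: n => [|n [vs [sz hv hbv hpp]]].
  by exists [::]; split => // v; rewrite in_nil.
have e1 : ev I x (fun u => forall z, z \in bs -> Pp z u) by apply: ev_all.
have e2 : ev I x (fun u => forall z, z \in vs -> Pp z u).
  by apply: ev_all => z /hv [Iz zx _]; apply: hP.
have [y [Iy yx [[Qy h1] h2]]] := ev_ex hp (ev_and (ev_and hQ e1) e2).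
exists (rcons vs y); split.
- by rewrite size_rcons sz.
- by move=> v; rewrite mem_rcons inE => /orP[/eqP->|/hv].
- by move=> b v bb; rewrite mem_rcons inE => /orP[/eqP->|]; [apply: h1 | apply: hbv].
- move=> i j ij jn; rewrite !nth_rcons sz.
  have jn' : (i < n)%N by apply: leq_trans ij _; rewrite -ltnS.
  rewrite jn'; case: (ltnP j n) => [jn2|nj]; first exact: hpp.
  have ejn : j = n by apply/eqP; rewrite eqn_leq nj andbT -ltnS.
  rewrite ejn eqxx; apply: h2; apply: mem_nth; by rewrite sz.
Qed.

End Sel.


Section Alg.
Variable R : realType.

Lemma dsum_ub n (X : 'I_n -> 'I_n -> R) c D :
  (forall i, X i i <= c + D) -> (forall i j, i != j -> X i j <= c) ->
  \sum_(i < n) \sum_(j < n) X i j <= n%:R ^+ 2 * c + n%:R * D.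
Proof.
move=> hd ho.
apply: (@le_trans _ _ (\sum_(i < n) \sum_(j < n) (c + (i == j)%:R * D))).
  apply: ler_sum => i _; apply: ler_sum => j _.
  case: (eqVneq i j) => [<-|ij]; first by rewrite /= mulr1n mul1r.
  by rewrite /= mulr0n mul0r addr0; apply: ho.
have h i : \sum_(j < n) (c + (i == j)%:R * D) = n%:R * c + D.
  rewrite big_split /= sumr_const card_ord [n%:R * c]mulr_natl; congr (_ + _).
  rewrite (bigD1 i) //= eqxx mulr1n mul1r big1 ?addr0 // => j /negbTE.
  by rewrite eq_sym => ->; rewrite mulr0n mul0r.
rewrite (eq_bigr _ (fun i _ => h i)) big_split /= !sumr_const card_ord.
by rewrite le_eqVlt; apply/orP; left; apply/eqP; ring.
Qed.

Lemma dsum_lb n m (Y : 'I_n -> 'I_m -> R) c :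
  (forall i j, c <= Y i j) -> n%:R * m%:R * c <= \sum_(i < n) \sum_(j < m) Y i j.
Proof.
move=> h.
apply: (@le_trans _ _ (\sum_(i < n) \sum_(j < m) c)); last first.
  by apply: ler_sum => i _; apply: ler_sum => j _.
by rewrite !sumr_const !card_ord le_eqVlt; apply/orP; left; apply/eqP; ring.
Qed.

Lemma sum_seq_const (s : seq R) (c : R) : \sum_(v <- s) c = (size s)%:R * c.
Proof.
elim: s => [|x s IH]; first by rewrite big_nil mul0r.
by rewrite big_cons IH /= -add1n natrD mulrDl mul1r.
Qed.

Lemma avg_close (s : seq R) (F : R -> R) c e : (0 < size s)%N ->
  (forall v, v \in s -> `|F v - c| <= e) ->
  `|(size s)%:R^-1 * \sum_(v <- s) F v - c| <= e.
Proof.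
move=> s0 h; have n0 : (size s)%:R != 0 :> R by rewrite pnatr_eq0 -lt0n.
have -> : (size s)%:R^-1 * \sum_(v <- s) F v - c =
          (size s)%:R^-1 * \sum_(v <- s) (F v - c).
  rewrite big_split /= sumrN sum_seq_const mulrDr mulrN mulKf //.
rewrite normrM normfV (ger0_norm (ler0n _ _)) ler_pdivrMl ?ltr0n //.
apply: le_trans (ler_norm_sum _ _ _) _.
apply: (@le_trans _ _ (\sum_(v <- s) e)); last by rewrite sum_seq_const.
rewrite big_seq [X in _ <= X]big_seq; apply: ler_sum => v vs; exact: h.
Qed.

End Alg.


Lemma limw_val (R : realType) (I : set R) x f (l l' : R) : l = l' -> limw I x f l -> limw I x f l'.
Proof. by move=> ->. Qed.

Section Main.
Variable R : realType.
Variable I : set R.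
Variables r r01 r10 r11 : R -> R -> R.
Variable C : R.
Hypothesis HI : is_interval I.
Hypothesis Hsym : forall x y, I x -> I y -> r x y = r y x.
Hypothesis H01 : forall x y, I x -> I y -> limw I y (fun v => (r x v - r x y) / (v - y)) (r01 x y).
Hypothesis H10 : forall x y, I x -> I y -> limw I x (fun u => (r u y - r x y) / (u - x)) (r10 x y).
Hypothesis H11 : forall x y, I x -> I y -> limw I x (fun u => (r01 u y - r01 x y) / (u - x)) (r11 x y).
Hypothesis HC : forall a b x y, I x -> I y -> `|rab r r01 r10 r11 a b x y| <= C.
Hypothesis Hp : forall x, I x -> hasp I x.
Hypothesis Hpsd : forall u, pts I u -> 0 <= ip r u u.

Lemma S1 x y : I x -> I y -> r10 x y = r01 y x.
Proof.
move=> Ix Iy; apply: (limw_unique (Hp Ix) (H10 Ix Iy)).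
apply: (limw_ext _ (H01 Iy Ix)) => u Iu _; by rewrite (Hsym Iy Iu) (Hsym Iy Ix).
Qed.


Lemma pts_dq y v : I y -> I v -> pts I (dq y v).
Proof. by move=> Iy Iv p; rewrite !inE => /orP[/eqP->|/eqP->]. Qed.

Lemma normdq y v : I y -> I v -> v != y -> ip r (dq y v) (dq y v) <= C.
Proof.
move=> Iy Iv vy.
have vy0 : v - y != 0 by rewrite subr_eq0.
pose f x := r x v - r x y.
have hf : `|f v - f y| <= (C * `|v - y|) * `|v - y|.
  apply: (@lip _ _ HI f (fun x => r10 x v - r10 x y)) => //.
    move=> x Ix; rewrite (_ : r10 x v - r10 x y = r10 x v + -1 * r10 x y); last by ring.
    apply: (limw_ext _ (limw_add (H10 Ix Iv) (limw_scale (-1) (H10 Ix Iy)))).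
    by move=> u _ _; rewrite /f; ring.
  move=> x Ix; rewrite (S1 Ix Iv) (S1 Ix Iy).
  apply: (@lip _ _ HI (fun z => r01 z x) (fun z => r11 z x)) => // z Iz.
    exact: H11.
  exact: (HC true true).
have -> : ip r (dq y v) (dq y v) = (f v - f y) / (v - y) ^+ 2.
  rewrite ip_dql !big_cons big_nil /= /f; field; exact: vy0.
apply: le_trans (ler_norm _) _.
rewrite normrM normfV normrX.
have h0 : 0 < `|v - y| ^+ 2 by rewrite exprn_gt0 // normr_gt0.
by rewrite ler_pdivrMr // expr2 mulrA.
Qed.

End Main.


Lemma limw_sum_seq (R : realType) (I : set R) x (T : eqType) (s : seq T) (F : T -> R -> R) (L : T -> R) :
  (forall i, i \in s -> limw I x (F i) (L i)) ->
  limw I x (fun u => \sum_(i <- s) F i u) (\sum_(i <- s) L i).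
Proof.
elim: s => [|a s IH] H.
  by rewrite [X in limw _ _ _ X]big_nil; apply: (limw_ext _ (limw_cst I x 0)) => u _ _; rewrite big_nil.
rewrite [X in limw _ _ _ X]big_cons.
have Ha := H a (mem_head _ _).
have Hs : limw I x (fun u => \sum_(i <- s) F i u) (\sum_(i <- s) L i).
  by apply: IH => i iS; apply: H; rewrite inE iS orbT.
by apply: (limw_ext _ (limw_add Ha Hs)) => u _ _; rewrite big_cons.
Qed.

Section Main2.
Variable R : realType.
Variable I : set R.
Variables r r01 r10 r11 : R -> R -> R.
Variable C : R.
Hypothesis HI : is_interval I.
Hypothesis Hsym : forall x y, I x -> I y -> r x y = r y x.
Hypothesis H01 : forall x y, I x -> I y -> limw I y (fun v => (r x v - r x y) / (v - y)) (r01 x y).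
Hypothesis H10 : forall x y, I x -> I y -> limw I x (fun u => (r u y - r x y) / (u - x)) (r10 x y).
Hypothesis H11 : forall x y, I x -> I y -> limw I x (fun u => (r01 u y - r01 x y) / (u - x)) (r11 x y).
Hypothesis HC : forall a b x y, I x -> I y -> `|rab r r01 r10 r11 a b x y| <= C.
Hypothesis Hp : forall x, I x -> hasp I x.
Hypothesis Hpsd : forall u, pts I u -> 0 <= ip r u u.

Lemma pts_cat u w : pts I u -> pts I w -> pts I (u ++ w).
Proof. by move=> pu pw p; rewrite mem_cat => /orP[/pu|/pw]. Qed.

Lemma pts_sc c u : pts I u -> pts I (sc c u).
Proof. by move=> pu p /mapP [q qu ->] /=; apply: pu. Qed.

Definition avg y (vs : seq R) := sc ((size vs)%:R^-1) (flatten [seq dq y v | v <- vs]).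

Lemma pts_avg y vs : I y -> (forall v, v \in vs -> I v) -> pts I (avg y vs).
Proof.
move=> Iy hv; apply: pts_sc => p /flatten_mapP [v vv]; rewrite !inE => /orP[/eqP->|/eqP->] //=.
exact: hv.
Qed.

Lemma Llim y u : I y -> pts I u ->
  limw I y (fun v => ip r u (dq y v)) (\sum_(p <- u) p.1 * r01 p.2 y).
Proof.
move=> Iy pu.
apply: (limw_ext _ (limw_sum_seq (F := fun p v => p.1 * ((r p.2 v - r p.2 y) / (v - y))) _)).
  by move=> v _ _; rewrite ip_dqr.
move=> p /pu Ip; apply: limw_scale; exact: H01.
Qed.

Lemma cs_ineq u w lam : pts I u -> pts I w -> 0 < lam ->
  `|ip r u w| <= (lam * ip r u u + ip r w w / lam) / 2.
Proof.
move=> pu pw l0.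
have sym := ip_sym Hsym pw pu.
have e c : ip r (sc lam u ++ sc c w) (sc lam u ++ sc c w) =
    lam * (lam * ip r u u + (c * c) * (ip r w w / lam) + 2 * c * ip r u w).
  rewrite !ip_catl !ip_catr !ip_scl !ip_scr sym; field; exact: lt0r_neq0.
have h1 := Hpsd (pts_cat (pts_sc (c:=lam) pu) (pts_sc (c:=-1) pw)).
have h2 := Hpsd (pts_cat (pts_sc (c:=lam) pu) (pts_sc (c:=1) pw)).
rewrite e pmulr_rge0 // in h1; rewrite e pmulr_rge0 // in h2.
rewrite ler_norml; apply/andP; split; lra.
Qed.

Lemma ip_avgr u y vs : ip r u (avg y vs) = (size vs)%:R^-1 * \sum_(v <- vs) ip r u (dq y v).
Proof. by rewrite /avg ip_scr ip_flatr. Qed.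

Lemma ip_avg2 y vs z ws : ip r (avg y vs) (avg z ws) =
  (size vs)%:R^-1 * (size ws)%:R^-1 *
  \sum_(i < size vs) \sum_(j < size ws) ip r (dq y (nth 0 vs i)) (dq z (nth 0 ws j)).
Proof.
rewrite /avg ip_scl ip_scr mulrA ip_flatl (big_nth 0) big_mkord; congr (_ * _).
by apply: eq_bigr => i _; rewrite ip_flatr (big_nth 0) big_mkord.
Qed.

Lemma ip_diff u w : ip r (u ++ sc (-1) w) (u ++ sc (-1) w) =
  ip r u u - ip r u w - ip r w u + ip r w w.
Proof. rewrite !ip_catl !ip_catr !ip_scl !ip_scr; ring. Qed.


Lemma r11_sym s t : I s -> I t -> r11 s t = r11 t s.
Proof.
move=> Is It.
have C0 : 0 <= C := le_trans (normr_ge0 _) (HC false false Is Is).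
have hpt := Hp It; have hps := Hp Is.
set al := r11 s t; set be := r11 t s; set rho := r11 t t.
have rhoC : - C <= rho by have := HC true true It It; rewrite /= ler_norml => /andP[].
pose phi u := (r01 u t - r01 s t) / (u - s).
pose psi v := (r01 v s - r01 t s) / (v - t).
pose gg v := (r01 v t - r01 t t) / (v - t).
have Lphi : limw I s phi al := H11 Is It.
have Lpsi : limw I t psi be := H11 It Is.
have Lgg : limw I t gg rho := H11 It It.
have F1 u : I u -> limw I t (fun v => ip r (dq s u) (dq t v)) (phi u).
  move=> Iu; apply: (limw_val _ (Llim It (pts_dq Is Iu))).
  by rewrite !big_cons big_nil /= /phi; ring.
have F2 v : I v -> limw I s (fun u => ip r (dq s u) (dq t v)) (psi v).
  move=> Iv; apply: (limw_ext _ (limw_val _ (Llim Is (pts_dq It Iv)))).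
    by move=> u Iu _; apply: (ip_sym Hsym); apply: pts_dq.
  by rewrite !big_cons big_nil /= /psi; ring.
have F3 v : I v -> limw I t (fun w => ip r (dq t v) (dq t w)) (gg v).
  move=> Iv; apply: (limw_val _ (Llim It (pts_dq It Iv))).
  by rewrite !big_cons big_nil /= /gg; ring.
have na v : I v -> v != t -> ip r (dq t v) (dq t v) <= C.
  by move=> Iv vt; exact: (normdq HI Hsym H01 H10 H11 HC Hp It Iv vt).
apply/eqP; rewrite -subr_eq0 -normr_le0; apply: le_of_forall => eta eta0; rewrite add0r.
pose lam := eta / (2 * (C + 1)).
have lam0 : 0 < lam by rewrite /lam divr_gt0 // mulr_gt0 // ltr_wpDl.
pose eps := Num.min (eta / 8) (lam * eta / 16).
have eps0 : 0 < eps by rewrite /eps lt_min !divr_gt0 // mulr_gt0.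
have eps1 : eps <= eta / 8 by rewrite /eps ge_min lexx.
have eps2 : eps <= lam * eta / 16 by rewrite /eps ge_min lexx orbT.
pose N := (Num.Def.trunc (8 * C / (lam * eta))).+1.
have NN : 8 * C / (lam * eta) < N%:R.
  rewrite -truncn_lt_nat ?ltnSn //; apply: divr_ge0; [lra | exact: ltW (mulr_gt0 _ _)].
have N0 : (0 < N)%N by [].
have NR0 : 0 < N%:R :> R by rewrite ltr0n.
pose Pp y z := `|ip r (dq t y) (dq t z) - gg y| <= eps.
have evPp y : I y -> y != t -> ev I t (Pp y) by move=> Iy _; exact: limw_ev (F3 y Iy) eps0.
have nob : forall b, b \in [::] -> ev I t (Pp b) by move=> b; rewrite in_nil.
have [vs [szv hv _ hpv]] := select (Q := fun v => `|psi v - be| <= eps /\ `|gg v - rho| <= eps)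
  (Pp := Pp) N hpt (ev_and (limw_ev Lpsi eps0) (limw_ev Lgg eps0)) evPp nob.
set A := avg t vs.
have Ivs : forall v, v \in vs -> I v by move=> v /hv [].
have pA : pts I A := pts_avg It Ivs.
set q := C / N%:R.
have Ninv : N%:R^-1 * N%:R^-1 * (N%:R * N%:R) = 1 :> R.
  by field; rewrite pnatr_eq0.
have normavg : forall ws, size ws = N ->
    (forall w, w \in ws -> [/\ I w, w != t & `|gg w - rho| <= eps]) ->
    (forall i j, (i < j)%N -> (j < N)%N -> Pp (nth 0 ws i) (nth 0 ws j)) ->
    ip r (avg t ws) (avg t ws) <= rho + 2 * eps + 2 * q.
  move=> ws sz hw hp; rewrite ip_avg2 sz.
  have mw (i : 'I_N) : nth 0 ws i \in ws by apply: mem_nth; rewrite sz.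
  have Iw (i : 'I_N) : I (nth 0 ws i) by have [] := hw _ (mw i).
  have key (i j : 'I_N) : (i < j)%N ->
      ip r (dq t (nth 0 ws i)) (dq t (nth 0 ws j)) <= rho + 2 * eps.
    move=> ij; have := hp i j ij (ltn_ord j); rewrite /Pp => h1.
    have [_ _ h2] := hw _ (mw i).
    move: h1 h2; rewrite !ler_norml => /andP[h1 h1'] /andP[h2 h2']; lra.
  have H := dsum_ub (n := N) (X := fun i j : 'I_N => ip r (dq t (nth 0 ws i)) (dq t (nth 0 ws j)))
     (c := rho + 2 * eps) (D := 2 * C) _ _.
  apply: le_trans (ler_wpM2l _ (H _ _)) _.
  - by rewrite mulr_ge0 // invr_ge0 ler0n.
  - move=> i; have [Iwi wt _] := hw _ (mw i); have := na _ Iwi wt; lra.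
  - move=> i j ij; case: (ltngtP i j) => [l|l|e]; first exact: key.
      rewrite (ip_sym Hsym); [exact: key | exact: (pts_dq It (Iw _)) | exact: (pts_dq It (Iw _))].
    by move: ij; rewrite (val_inj e) eqxx.
  rewrite le_eqVlt; apply/orP; left; apply/eqP; rewrite /q; field; by rewrite pnatr_eq0.
have crossavg : forall ws, size ws = N ->
    (forall v w, v \in vs -> w \in ws -> Pp v w) ->
    rho - 2 * eps <= ip r A (avg t ws).
  move=> ws sz hb; rewrite /A ip_avg2 szv sz.
  have mv (i : 'I_N) : nth 0 vs i \in vs by apply: mem_nth; rewrite szv.
  have mw (i : 'I_N) : nth 0 ws i \in ws by apply: mem_nth; rewrite sz.
  have H := dsum_lb (n := N) (m := N) (Y := fun i j : 'I_N => ip r (dq t (nth 0 vs i)) (dq t (nth 0 ws j)))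
     (c := rho - 2 * eps) _.
  apply: le_trans _ (ler_wpM2l _ (H _)).
  - by rewrite mulrA Ninv mul1r.
  - by rewrite mulr_ge0 // invr_ge0 ler0n.
  move=> i j; have := hb _ _ (mv i) (mw j); rewrite /Pp => h1.
  have [_ _ [_ h2]] := hv _ (mv i).
  move: h1 h2; rewrite !ler_norml => /andP[h1 h1'] /andP[h2 h2']; lra.
have normA : ip r A A <= rho + 2 * eps + 2 * q.
  apply: normavg => //; first by move=> w /hv [? ? []].
pose Dl := 4 * q + 8 * eps.
have key u : I u -> u != s -> `|phi u - ip r (dq s u) A| <= eps + (lam * C + Dl / lam) / 2.
  move=> Iu us.
  have evb : forall b, b \in vs -> ev I t (Pp b) by move=> b /hv [Ib bt _]; exact: evPp.
  have [ws [szw hw hbw hpw]] := select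
    (Q := fun w => `|ip r (dq s u) (dq t w) - phi u| <= eps /\ `|gg w - rho| <= eps)
    (Pp := Pp) N hpt (ev_and (limw_ev (F1 u Iu) eps0) (limw_ev Lgg eps0)) evPp evb.
  set A' := avg t ws.
  have pA' : pts I A' by apply: pts_avg => // w /hw [].
  have h1 : `|ip r (dq s u) A' - phi u| <= eps.
    rewrite /A' ip_avgr; apply: avg_close; first by rewrite szw.
    by move=> w /hw [_ _ []].
  have nA' : ip r A' A' <= rho + 2 * eps + 2 * q.
    by apply: normavg => //; move=> w /hw [? ? []].
  have cA : rho - 2 * eps <= ip r A A' by apply: crossavg.
  set Df := A ++ sc (-1) A'.
  have pD : pts I Df by apply: pts_cat => //; apply: pts_sc.
  have hD : ip r Df Df <= Dl.
    rewrite /Df ip_diff (ip_sym Hsym pA' pA) /Dl; lra.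
  have hcs := cs_ineq (pts_dq Is Iu) pD lam0.
  have nb := normdq HI Hsym H01 H10 H11 HC Hp Is Iu us.
  have hcs2 : `|ip r (dq s u) Df| <= (lam * C + Dl / lam) / 2.
    apply: le_trans hcs _; rewrite ler_pM2r // lerD //.
      by rewrite ler_pM2l.
    by rewrite ler_pM2r // invr_gt0.
  have eD : ip r (dq s u) Df = ip r (dq s u) A - ip r (dq s u) A'.
    by rewrite /Df ip_catr ip_scr mulN1r.
  rewrite (_ : phi u - ip r (dq s u) A = - (ip r (dq s u) A' - phi u) - ip r (dq s u) Df); last first.
    by rewrite eD; ring.
  apply: le_trans (ler_normB _ _) _; rewrite normrN; exact: lerD.
have LbA : limw I s (fun u => ip r (dq s u) A) ((size vs)%:R^-1 * \sum_(v <- vs) psi v).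
  apply: (limw_ext _ (limw_scale _ (limw_sum_seq (F := fun v u => ip r (dq s u) (dq t v)) _))).
    by move=> u _ _; rewrite /A ip_avgr.
  by move=> v /Ivs Iv; apply: F2.
have evk : ev I s (fun u => `|phi u - ip r (dq s u) A| <= eps + (lam * C + Dl / lam) / 2).
  by exists 1 => // u Iu us _; exact: key.
have close := limw_close hps Lphi LbA evk.
have hbe : `|(size vs)%:R^-1 * \sum_(v <- vs) psi v - be| <= eps.
  by apply: avg_close; [rewrite szv | move=> v /hv [_ _ []]].
have lamn0 : lam != 0 by rewrite lt0r_neq0.
have f1 : lam * C <= eta / 2.
  have e1 : lam * (2 * (C + 1)) = eta by rewrite /lam; field; rewrite lt0r_neq0 //; lra.
  have : 0 <= lam * 2 by rewrite mulr_ge0 //; exact: ltW.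
  move: e1; set X := lam * C; move=> e1 h.
  have -> : eta = 2 * X + lam * 2 by rewrite -e1 /X; ring.
  lra.
have f2 : q / lam <= eta / 8.
  have NN' : 8 * C < N%:R * (lam * eta).
    by rewrite -ltr_pdivrMr //; exact: mulr_gt0.
  rewrite (_ : q / lam = C / (N%:R * lam)); last by rewrite /q; field; rewrite lamn0 pnatr_eq0.
  rewrite ler_pdivrMr; last exact: mulr_gt0.
  rewrite (_ : eta / 8 * (N%:R * lam) = N%:R * (lam * eta) / 8); last by ring.
  lra.
have f3 : eps / lam <= eta / 16.
  rewrite ler_pdivrMr; last exact: lam0.
  by rewrite (_ : eta / 16 * lam = lam * eta / 16) //; ring.
have e2 : (lam * C + Dl / lam) / 2 = (lam * C) / 2 + 2 * (q / lam) + 4 * (eps / lam).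
  by rewrite /Dl; field.
rewrite e2 in close.
rewrite (_ : al - be = (al - (size vs)%:R^-1 * \sum_(v <- vs) psi v) +
   ((size vs)%:R^-1 * \sum_(v <- vs) psi v - be)); last by ring.
apply: le_trans (ler_normD _ _) _.
move: close hbe f1 f2 f3 eps1.
set X1 := lam * C; set X2 := q / lam; set X3 := eps / lam.
set Y1 := `|_ - _|; set Y2 := `|_ - _|.
move=> *; lra.
Qed.

End Main2.


Section Prob.
Context d (T : measurableType d) (R : realType) (P : probability T R).

Lemma Lfun_sum (A : eqType) (l : seq A) (F : A -> T -> R) :
  (forall i, i \in l -> F i \in Lfun P 1) ->
  (fun w => \sum_(i <- l) F i w) \in Lfun P 1.
Proof.
elim: l => [|a l IH] H.
  have -> : (fun w : T => \sum_(i <- [::]) F i w) = cst 0.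
    by apply: funext => w; rewrite big_nil.
  by apply: Lfun_cst.
have -> : (fun w : T => \sum_(i <- a :: l) F i w) = F a \+ (fun w => \sum_(i <- l) F i w).
  by apply: funext => w; rewrite big_cons.
apply: rpredD; first by apply: H; rewrite mem_head.
by apply: IH => i il; apply: H; rewrite inE il orbT.
Qed.

Lemma E_sum (A : eqType) (l : seq A) (F : A -> T -> R) :
  (forall i, i \in l -> F i \in Lfun P 1) ->
  ('E_P[fun w => (\sum_(i <- l) F i w)%R] = \sum_(i <- l) 'E_P[F i])%E.
Proof.
elim: l => [|a l IH] H.
  have -> : (fun w : T => \sum_(i <- [::]) F i w) = cst 0.
    by apply: funext => w; rewrite big_nil.
  by rewrite expectation_cst big_nil.
have -> : (fun w : T => \sum_(i <- a :: l) F i w) = F a \+ (fun w => \sum_(i <- l) F i w).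
  by apply: funext => w; rewrite big_cons.
have Ha : F a \in Lfun P 1 by apply: H; rewrite mem_head.
have Hl : forall i, i \in l -> F i \in Lfun P 1 by move=> i il; apply: H; rewrite inE il orbT.
rewrite expectationD //; last exact: Lfun_sum.
by rewrite IH // big_cons.
Qed.

Lemma psd_from (I : set R) (Y : R -> T -> R) (r : R -> R -> R) :
  (forall s, I s -> measurable_fun setT (Y s)) ->
  (forall s t, I s -> I t -> ('E_P[Y s \* Y t] = (r s t)%:E)%E) ->
  forall u, pts I u -> 0 <= ip r u u.
Proof.
move=> mY HE u pu.
have L x y : I x -> I y -> (Y x \* Y y) \in Lfun P 1.
  move=> Ix Iy; apply/Lfun1_integrable/integrableP; split.
    by apply/measurable_EFinP; apply: measurable_funM; apply: mY.
  rewrite integral_fin_num_abs //; first by have := HE x y Ix Iy; rewrite unlock => ->.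
  by apply: measurable_funM; apply: mY.
pose G (p q : R * R) := (p.1 * q.1) \o* (Y p.2 \* Y q.2).
have LG p q : p \in u -> q \in u -> G p q \in Lfun P 1.
  by move=> pu' qu'; apply: Lfun_scale => //; apply: L; [apply: pu | apply: pu].
pose Z w := \sum_(p <- u) p.1 * Y p.2 w.
have eZ : Z \* Z = (fun w => \sum_(p <- u) (fun w => \sum_(q <- u) G p q w) w).
  apply: funext => w; rewrite /Z /= mulr_suml; apply: eq_bigr => p _.
  rewrite mulr_sumr; apply: eq_bigr => q _; rewrite /G /=; ring.
have h0 : (0 <= 'E_P[Z \* Z])%E.
  by apply: expectation_ge0 => w /=; rewrite -expr2 sqr_ge0.
rewrite eZ E_sum in h0; last first.
  by move=> p pu'; apply: Lfun_sum => q qu'; apply: LG.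
have e2 : (\sum_(p <- u) 'E_P[fun w => (\sum_(q <- u) G p q w)%R] = (ip r u u)%:E)%E.
  rewrite /ip -sumEFin; apply: eq_big_seq => p pu'.
  rewrite E_sum; last by move=> q qu'; apply: LG.
  rewrite -sumEFin; apply: eq_big_seq => q qu'.
  rewrite /G expectationZl; last by apply: L; apply: pu.
  by rewrite (HE _ _ (pu _ pu') (pu _ qu')).
by rewrite e2 lee_fin in h0.
Qed.

End Prob.


Lemma hasp_of (R : realType) (I : set R) x y : is_interval I -> I x -> I y -> y != x -> hasp I x.
Proof.
move=> HI Ix Iy yx e e0.
have yx0 : 0 < `|y - x| by rewrite normr_gt0 subr_eq0.
pose c := Num.min 1 (e / (2 * `|y - x|)).
have c0 : 0 < c by rewrite /c lt_min ltr01 /= divr_gt0 // mulr_gt0.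
have c1 : c <= 1 by rewrite /c ge_min lexx.
have c2 : c <= e / (2 * `|y - x|) by rewrite /c ge_min lexx orbT.
exists (x + (y - x) * c); split.
- have [xy|yx'] := leP x y.
    by apply: (in_I HI Ix Iy); nra.
  by apply: (in_I HI Iy Ix); nra.
- by rewrite addrC -subr_eq0 addrK mulf_neq0 ?subr_eq0 // lt0r_neq0.
- rewrite addrAC subrr add0r normrM (gtr0_norm c0).
  apply: (@le_lt_trans _ _ (`|y - x| * (e / (2 * `|y - x|)))); first by rewrite ler_pM2l.
  rewrite (_ : `|y - x| * (e / (2 * `|y - x|)) = e / 2); first lra.
  by field; rewrite lt0r_neq0.
Qed.

Section D.
Variable R : comNzRingType.
Lemma det_nat n (f : nat -> nat -> R) :
  \det (\matrix_(i < n.+1, j < n.+1) f i j) =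
  \sum_(j < n.+1) f 0%N j * ((-1) ^+ j * \det (\matrix_(i < n, k < n) f i.+1 (bump j k))).
Proof.
rewrite (expand_det_row _ 0); apply: eq_bigr => j _.
rewrite mxE /cofactor add0n; congr (_ * (_ * \det _)).
by apply/matrixP => i k; rewrite !mxE.
Qed.
Lemma det2n (f : nat -> nat -> R) :
  \det (\matrix_(i < 2, j < 2) f i j) = f 0%N 0%N * f 1%N 1%N - f 0%N 1%N * f 1%N 0%N.
Proof.
rewrite det_nat !big_ord_recr big_ord0 /= !det_mx11 !mxE /=.
rewrite expr0 expr1 add0r mul1r; congr (_ + _); rewrite mulN1r mulrN //.
Qed.
Lemma det3n (f : nat -> nat -> R) :
  \det (\matrix_(i < 3, j < 3) f i j) =
  f 0%N 0%N * (f 1%N 1%N * f 2%N 2%N - f 1%N 2%N * f 2%N 1%N)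
  - f 0%N 1%N * (f 1%N 0%N * f 2%N 2%N - f 1%N 2%N * f 2%N 0%N)
  + f 0%N 2%N * (f 1%N 0%N * f 2%N 1%N - f 1%N 1%N * f 2%N 0%N).
Proof.
rewrite det_nat !big_ord_recr big_ord0 /=.
rewrite (det2n (fun i k => f i.+1 (bump 0 k))) (det2n (fun i k => f i.+1 (bump 1 k)))
  (det2n (fun i k => f i.+1 (bump 2 k))) /=.
rewrite !expr0 expr1 expr2 mulN1r mulrN1 opprK !mul1r add0r.
by rewrite mulrN.
Qed.
Lemma det4n (f : nat -> nat -> R) :
  \det (\matrix_(i < 4, j < 4) f i j) =
    f 0%N 0%N * (f 1%N 1%N * (f 2%N 2%N * f 3%N 3%N - f 2%N 3%N * f 3%N 2%N) - f 1%N 2%N * (f 2%N 1%N * f 3%N 3%N - f 2%N 3%N * f 3%N 1%N) + f 1%N 3%N * (f 2%N 1%N * f 3%N 2%N - f 2%N 2%N * f 3%N 1%N))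
  - f 0%N 1%N * (f 1%N 0%N * (f 2%N 2%N * f 3%N 3%N - f 2%N 3%N * f 3%N 2%N) - f 1%N 2%N * (f 2%N 0%N * f 3%N 3%N - f 2%N 3%N * f 3%N 0%N) + f 1%N 3%N * (f 2%N 0%N * f 3%N 2%N - f 2%N 2%N * f 3%N 0%N))
  + f 0%N 2%N * (f 1%N 0%N * (f 2%N 1%N * f 3%N 3%N - f 2%N 3%N * f 3%N 1%N) - f 1%N 1%N * (f 2%N 0%N * f 3%N 3%N - f 2%N 3%N * f 3%N 0%N) + f 1%N 3%N * (f 2%N 0%N * f 3%N 1%N - f 2%N 1%N * f 3%N 0%N))
  - f 0%N 3%N * (f 1%N 0%N * (f 2%N 1%N * f 3%N 2%N - f 2%N 2%N * f 3%N 1%N) - f 1%N 1%N * (f 2%N 0%N * f 3%N 2%N - f 2%N 2%N * f 3%N 0%N) + f 1%N 2%N * (f 2%N 0%N * f 3%N 1%N - f 2%N 1%N * f 3%N 0%N)).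
Proof.
rewrite det_nat !big_ord_recr big_ord0 /=.
rewrite (det3n (fun i k => f i.+1 (bump 0 k))) (det3n (fun i k => f i.+1 (bump 1 k)))
  (det3n (fun i k => f i.+1 (bump 2 k))) (det3n (fun i k => f i.+1 (bump 3 k))) /=.
rewrite !expr0 expr1 expr2 mulN1r mulrN1 opprK !mul1r add0r.
rewrite /bump /=; ring.
Qed.
End D.

Lemma addle (R : realDomainType) (a b x y : R) : `|a| <= x -> `|b| <= y -> `|a + b| <= x + y.
Proof. by move=> ha hb; apply: le_trans (ler_normD _ _) _; apply: lerD. Qed.

Lemma b1 (R : realDomainType) (C M x y u v : R) : 0 <= C -> 0 <= M ->
  `|x| <= C -> `|y| <= C -> `|u| <= M -> `|v| <= M -> `|x * y * u * v| <= C ^+ 2 * M ^+ 2.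
Proof.
move=> C0 M0 hx hy hu hv; rewrite !normrM !expr2 !mulrA.
by apply: ler_pM; rewrite ?mulr_ge0 ?normr_ge0 //; apply: ler_pM; rewrite ?mulr_ge0 ?normr_ge0 //;
  apply: ler_pM; rewrite ?normr_ge0.
Qed.

Lemma b2 (R : realDomainType) (C M x y u v : R) : 0 <= M -> M <= C ->
  `|x| <= M -> `|y| <= M -> `|u| <= M -> `|v| <= M -> `|x * y * u * v| <= C ^+ 2 * M ^+ 2.
Proof.
move=> M0 MC hx hy hu hv; apply: (@le_trans _ _ (M * M * M * M)).
  by rewrite !normrM; apply: ler_pM; rewrite ?mulr_ge0 ?normr_ge0 //; apply: ler_pM;
    rewrite ?mulr_ge0 ?normr_ge0 //; apply: ler_pM; rewrite ?normr_ge0.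
have h : M * M <= C * C by apply: ler_pM.
rewrite !expr2 (_ : M * M * M * M = (M * M) * (M * M)); last by ring.
by apply: ler_wpM2r => //; rewrite mulr_ge0.
Qed.

Lemma det_bound (R : realDomainType) (f : nat -> nat -> R) (C M : R) :
  0 <= M -> M <= C ->
  (forall i j, odd i = odd j -> `|f i j| <= C) ->
  (forall i j, odd i != odd j -> `|f i j| <= M) ->
  `|(    f 0%N 0%N * (f 1%N 1%N * (f 2%N 2%N * f 3%N 3%N - f 2%N 3%N * f 3%N 2%N) - f 1%N 2%N * (f 2%N 1%N * f 3%N 3%N - f 2%N 3%N * f 3%N 1%N) + f 1%N 3%N * (f 2%N 1%N * f 3%N 2%N - f 2%N 2%N * f 3%N 1%N))
  - f 0%N 1%N * (f 1%N 0%N * (f 2%N 2%N * f 3%N 3%N - f 2%N 3%N * f 3%N 2%N) - f 1%N 2%N * (f 2%N 0%N * f 3%N 3%N - f 2%N 3%N * f 3%N 0%N) + f 1%N 3%N * (f 2%N 0%N * f 3%N 2%N - f 2%N 2%N * f 3%N 0%N))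
  + f 0%N 2%N * (f 1%N 0%N * (f 2%N 1%N * f 3%N 3%N - f 2%N 3%N * f 3%N 1%N) - f 1%N 1%N * (f 2%N 0%N * f 3%N 3%N - f 2%N 3%N * f 3%N 0%N) + f 1%N 3%N * (f 2%N 0%N * f 3%N 1%N - f 2%N 1%N * f 3%N 0%N))
  - f 0%N 3%N * (f 1%N 0%N * (f 2%N 1%N * f 3%N 2%N - f 2%N 2%N * f 3%N 1%N) - f 1%N 1%N * (f 2%N 0%N * f 3%N 2%N - f 2%N 2%N * f 3%N 0%N) + f 1%N 2%N * (f 2%N 0%N * f 3%N 1%N - f 2%N 1%N * f 3%N 0%N))) - (f 0%N 0%N * f 2%N 2%N - f 0%N 2%N * f 2%N 0%N) * (f 1%N 1%N * f 3%N 3%N - f 1%N 3%N * f 3%N 1%N)| <= 20 * C ^+ 2 * M ^+ 2.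
Proof.
move=> M0 MC hS hX; have C0 : 0 <= C := le_trans M0 MC.
have -> : (    f 0%N 0%N * (f 1%N 1%N * (f 2%N 2%N * f 3%N 3%N - f 2%N 3%N * f 3%N 2%N) - f 1%N 2%N * (f 2%N 1%N * f 3%N 3%N - f 2%N 3%N * f 3%N 1%N) + f 1%N 3%N * (f 2%N 1%N * f 3%N 2%N - f 2%N 2%N * f 3%N 1%N))
  - f 0%N 1%N * (f 1%N 0%N * (f 2%N 2%N * f 3%N 3%N - f 2%N 3%N * f 3%N 2%N) - f 1%N 2%N * (f 2%N 0%N * f 3%N 3%N - f 2%N 3%N * f 3%N 0%N) + f 1%N 3%N * (f 2%N 0%N * f 3%N 2%N - f 2%N 2%N * f 3%N 0%N))
  + f 0%N 2%N * (f 1%N 0%N * (f 2%N 1%N * f 3%N 3%N - f 2%N 3%N * f 3%N 1%N) - f 1%N 1%N * (f 2%N 0%N * f 3%N 3%N - f 2%N 3%N * f 3%N 0%N) + f 1%N 3%N * (f 2%N 0%N * f 3%N 1%N - f 2%N 1%N * f 3%N 0%N))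
  - f 0%N 3%N * (f 1%N 0%N * (f 2%N 1%N * f 3%N 2%N - f 2%N 2%N * f 3%N 1%N) - f 1%N 1%N * (f 2%N 0%N * f 3%N 2%N - f 2%N 2%N * f 3%N 0%N) + f 1%N 2%N * (f 2%N 0%N * f 3%N 1%N - f 2%N 1%N * f 3%N 0%N))) - (f 0%N 0%N * f 2%N 2%N - f 0%N 2%N * f 2%N 0%N) * (f 1%N 1%N * f 3%N 3%N - f 1%N 3%N * f 3%N 1%N) = - (f 0%N 0%N * f 1%N 1%N * f 2%N 3%N * f 3%N 2%N) + - (f 0%N 0%N * f 3%N 3%N * f 1%N 2%N * f 2%N 1%N) + (f 0%N 0%N * f 3%N 1%N * f 1%N 2%N * f 2%N 3%N) + (f 0%N 0%N * f 1%N 3%N * f 2%N 1%N * f 3%N 2%N) + - (f 2%N 2%N * f 3%N 3%N * f 0%N 1%N * f 1%N 0%N) + (f 0%N 1%N * f 1%N 0%N * f 2%N 3%N * f 3%N 2%N) + (f 2%N 0%N * f 3%N 3%N * f 0%N 1%N * f 1%N 2%N) + - (f 0%N 1%N * f 1%N 2%N * f 2%N 3%N * f 3%N 0%N) + - (f 1%N 3%N * f 2%N 0%N * f 0%N 1%N * f 3%N 2%N) + (f 1%N 3%N * f 2%N 2%N * f 0%N 1%N * f 3%N 0%N) + (f 0%N 2%N * f 3%N 3%N * f 1%N 0%N * f 2%N 1%N) + - (f 0%N 2%N * f 3%N 1%N * f 1%N 0%N * f 2%N 3%N) + (f 0%N 2%N * f 1%N 1%N * f 2%N 3%N * f 3%N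 0%N) + - (f 0%N 2%N * f 1%N 3%N * f 2%N 1%N * f 3%N 0%N) + - (f 0%N 3%N * f 1%N 0%N * f 2%N 1%N * f 3%N 2%N) + (f 2%N 2%N * f 3%N 1%N * f 0%N 3%N * f 1%N 0%N) + (f 1%N 1%N * f 2%N 0%N * f 0%N 3%N * f 3%N 2%N) + - (f 1%N 1%N * f 2%N 2%N * f 0%N 3%N * f 3%N 0%N) + - (f 2%N 0%N * f 3%N 1%N * f 0%N 3%N * f 1%N 2%N) + (f 0%N 3%N * f 1%N 2%N * f 2%N 1%N * f 3%N 0%N) by ring.
have -> : 20 * C ^+ 2 * M ^+ 2 = C ^+ 2 * M ^+ 2 + C ^+ 2 * M ^+ 2 + C ^+ 2 * M ^+ 2 + C ^+ 2 * M ^+ 2 + C ^+ 2 * M ^+ 2 + C ^+ 2 * M ^+ 2 + C ^+ 2 * M ^+ 2 + C ^+ 2 * M ^+ 2 + C ^+ 2 * M ^+ 2 + C ^+ 2 * M ^+ 2 + C ^+ 2 * M ^+ 2 + C ^+ 2 * M ^+ 2 + C ^+ 2 * M ^+ 2 + C ^+ 2 * M ^+ 2 + C ^+ 2 * M ^+ 2 + C ^+ 2 * M ^+ 2 + C ^+ 2 * M ^+ 2 + C ^+ 2 * M ^+ 2 + C ^+ 2 * M ^+ 2 + C ^+ 2 * M ^+ 2 :> R by ring.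
repeat apply: addle; rewrite ?normrN;
  first [ apply: b1 => //; [by apply: hS|by apply: hS|by apply: hX|by apply: hX]
        | apply: b2 => //; by apply: hX ].
Qed.


Lemma hdw_lim (R : realType) (I : set R) f x l : has_deriv_within I f x l ->
  limw I x (fun u => (f u - f x) / (u - x)) l.
Proof.
move=> H e e0; have FF : Filter (within (fun u => I u /\ u != x) (nbhs x)) by exact: within_filter.
have := (cvgrPdist_lt _ _).1 H e e0; move=> /(_ FF).
rewrite near_withinE => /nbhs_ballP; case=> d /= d0 Hd.
exists d => // u Iu ux ud.
have := Hd u; rewrite -ball_normE /= distrC => /(_ ud) /(_ (conj Iu ux)).
by rewrite distrC.
Qed.

Unset Implicit Arguments. Set Strict Implicit.

Theorem lemma9 (R : realType) (d : measure_display) (T : measurableType d)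
  (P : probability T R) (I : set R) (Y : R -> T -> R)
  (r r01 r10 r11 : R -> R -> R) (C : R) :
  is_interval I ->
  centered_gaussian_process P I Y ->
  (forall s t, I s -> I t -> ('E_P[Y s \* Y t])%E = (r s t)%:E) ->
  (forall s t, I s -> I t -> has_deriv_within I (fun v => r s v) t (r01 s t)) ->
  (forall s t, I s -> I t -> has_deriv_within I (fun u => r u t) s (r10 s t)) ->
  (forall s t, I s -> I t -> has_deriv_within I (fun u => r01 u t) s (r11 s t)) ->
  (forall (a b : bool) s t, I s -> I t -> `|rab r r01 r10 r11 a b s t| <= C) ->
  forall s tau, I s -> I (s + tau) ->
    `|\det (Sigma r r01 r10 r11 s (s + tau))
       - \det (Omega r r01 r10 r11 s) * \det (Omega r r01 r10 r11 (s + tau))|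
    <= 20 * C ^+ 2 * Mtau I r r01 r10 r11 tau ^+ 2.
Proof.
move=> HI [mY _] HE D01 D10 D11 HC s tau Is It.
set t := s + tau.
have H01 x y : I x -> I y -> limw I y (fun v => (r x v - r x y) / (v - y)) (r01 x y).
  by move=> Ix Iy; exact: (hdw_lim (D01 x y Ix Iy)).
have H10 x y : I x -> I y -> limw I x (fun u => (r u y - r x y) / (u - x)) (r10 x y).
  by move=> Ix Iy; exact: (hdw_lim (D10 x y Ix Iy)).
have H11 x y : I x -> I y -> limw I x (fun u => (r01 u y - r01 x y) / (u - x)) (r11 x y).
  by move=> Ix Iy; exact: (hdw_lim (D11 x y Ix Iy)).
have Hsym x y : I x -> I y -> r x y = r y x.
  move=> Ix Iy; have := HE x y Ix Iy; have := HE y x Iy Ix.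
  have -> : (Y y \* Y x) = (Y x \* Y y) by apply: funext => w /=; rewrite mulrC.
  by move=> -> [].
have Hpsd : forall u, pts I u -> 0 <= ip r u u.
  by move=> u pu; exact: (psd_from mY HE pu).
have C0 : 0 <= C := le_trans (normr_ge0 _) (HC false false s s Is Is).
set M := Mtau I r r01 r10 r11 tau.
pose S := [set x : R | exists s, [/\ I s, I (s + tau) &
        exists a b, x = `|rab r r01 r10 r11 a b s (s + tau)|]].
have Sne : S !=set0 by exists `|rab r r01 r10 r11 false false s t|; exists s; split => //; exists false, false.
have Sub : ubound S C by move=> x [s' [Is' It' [a [b ->]]]]; apply: HC.
have Mub a b : `|rab r r01 r10 r11 a b s t| <= M.
  apply: (sup_upper_bound (conj Sne (ex_intro _ C Sub))).
  by exists s; split => //; exists a, b.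
have MC : M <= C by apply: ge_sup.
have M0 : 0 <= M := le_trans (normr_ge0 _) (Mub false false).
have Mub' a b : `|rab r r01 r10 r11 a b t s| <= M.
  have [t0|tn0] := eqVneq tau 0.
    by have := Mub a b; rewrite /t t0 addr0.
  have ts : t != s by rewrite /t -subr_eq0 addrAC subrr add0r.
  have Hp : forall x, I x -> hasp I x.
    move=> x Ix; have [xs|xs] := eqVneq x s.
      by apply: (hasp_of HI Ix It); rewrite xs.
    by apply: (hasp_of HI Ix Is); rewrite eq_sym.
  case: a; case: b => /=.
  - rewrite -(r11_sym HI Hsym H01 H10 H11 HC Hp Hpsd Is It); exact: (Mub true true).
  - rewrite (S1 Hsym H01 H10 Hp It Is); exact: (Mub false true).
  - rewrite -(S1 Hsym H01 H10 Hp Is It); exact: (Mub true false).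
  - rewrite (Hsym t s It Is); exact: (Mub false false).
rewrite /Sigma /Omega.
rewrite (det4n (fun i j => rab r r01 r10 r11 (2 <= i)%N (2 <= j)%N
      (if odd i then t else s) (if odd j then t else s))).
rewrite (det2n (fun i j => rab r r01 r10 r11 (i == 1%N) (j == 1%N) s s)).
rewrite (det2n (fun i j => rab r r01 r10 r11 (i == 1%N) (j == 1%N) t t)).
apply: (det_bound (f := fun i j => rab r r01 r10 r11 (2 <= i)%N (2 <= j)%N
      (if odd i then t else s) (if odd j then t else s))) => //.
  move=> i j; case: (odd i); case: (odd j) => //= _; exact: HC.
move=> i j; case: (odd i); case: (odd j) => //= _; first [exact: Mub | exact: Mub'].
Qed.
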